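(* Let $\mathcal{A}=(a_{ijk})\in\mathbb{R}^{n\times n\times n}$ be a piezoelectric-type tensor. Define the fourth-order tensor $\mathcal{B}=(b_{i_1i_2i_3i_4})\in\mathbb{R}^{n\times n\times n\times n}$ by $b_{i_1i_2i_3i_4}=\sum_{i=1}^n a_{ii_1i_2}a_{ii_3i_4}$ for all $i_1,i_2,i_3,i_4\in\{1,\dots,n\}$, and the tensor $\bar{\mathcal{B}}=(\bar b_{i_1i_2i_3i_4})$ by $$\bar b_{i_1i_2i_3i_4}=\tfrac13\big(b_{i_1i_2i_3i_4}+b_{i_1i_3i_2i_4}+b_{i_1i_4i_2i_3}\big).$$ Then $\bar{\mathcal{B}}$ is positive semi-definite, i.e. $$\bar{\mathcal{B}}\mathbf{x}^4=\sum_{i_1,i_2,i_3,i_4=1}^n \bar b_{i_1i_2i_3i_4}x_{i_1}x_{i_2}x_{i_3}x_{i_4}\ge 0\quad\text{for all }\mathbf{x}\in\mathbb{R}^n.$$ Consequently, all $Z$-eigenvalues of $\bar{\mathcal{B}}$ are nonnegative.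
   Context: A third-order tensor $\mathcal{A}=(a_{ijk})\in\mathbb{R}^{n\times n\times n}$ is called piezoelectric-type if $a_{ijk}=a_{ikj}$ for all $i,j,k\in\{1,\dots,n\}$. For a fourth-order tensor $\mathcal{T}=(t_{i_1i_2i_3i_4})$ and $\mathbf{x}\in\mathbb{R}^n$, $\mathcal{T}\mathbf{x}^3\in\mathbb{R}^n$ is the vector with $i$-th entry $\sum_{i_2,i_3,i_4}t_{ii_2i_3i_4}x_{i_2}x_{i_3}x_{i_4}$. A real number $\lambda$ is a $Z$-eigenvalue of $\mathcal{T}$ if there is $\mathbf{x}\in\mathbb{R}^n$ with $\mathcal{T}\mathbf{x}^3=\lambda\mathbf{x}$ and $\mathbf{x}^T\mathbf{x}=1$. *)

(* Defs.v *)
From mathcomp Require Import all_boot all_order all_algebra.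
From mathcomp Require Import reals.
Set Implicit Arguments. Unset Strict Implicit. Unset Printing Implicit Defensive.
Import Order.TTheory GRing.Theory Num.Theory.
Local Open Scope ring_scope.

Definition tensor3 (R : Type) (n : nat) := 'I_n -> 'I_n -> 'I_n -> R.
Definition tensor4 (R : Type) (n : nat) := 'I_n -> 'I_n -> 'I_n -> 'I_n -> R.

Definition piezoelectric_type (R : Type) (n : nat) (A : tensor3 R n) : Prop :=
  forall i j k, A i j k = A i k j.

Definition tensorB (R : pzRingType) (n : nat) (A : tensor3 R n) : tensor4 R n :=
  fun i1 i2 i3 i4 => \sum_(i < n) A i i1 i2 * A i i3 i4.

Definition tensorBbar (R : fieldType) (n : nat) (A : tensor3 R n) : tensor4 R n :=
  fun i1 i2 i3 i4 =>
    3%:R^-1 * (tensorB A i1 i2 i3 i4 + tensorB A i1 i3 i2 i4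
               + tensorB A i1 i4 i2 i3).

Definition tform4 (R : pzRingType) (n : nat) (T : tensor4 R n) (x : 'I_n -> R) : R :=
  \sum_(i1 < n) \sum_(i2 < n) \sum_(i3 < n) \sum_(i4 < n)
     T i1 i2 i3 i4 * x i1 * x i2 * x i3 * x i4.

Definition tapply3 (R : pzRingType) (n : nat) (T : tensor4 R n) (x : 'I_n -> R)
  : 'I_n -> R :=
  fun i => \sum_(i2 < n) \sum_(i3 < n) \sum_(i4 < n)
     T i i2 i3 i4 * x i2 * x i3 * x i4.

Definition positive_semidefinite4 (R : numDomainType) (n : nat) (T : tensor4 R n) : Prop :=
  forall x : 'I_n -> R, 0 <= tform4 T x.

Definition Z_eigenvalue (R : pzRingType) (n : nat) (T : tensor4 R n) (lambda : R) : Prop :=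
  exists x : 'I_n -> R,
    (forall i, tapply3 T x i = lambda * x i) /\ \sum_(i < n) x i * x i = 1.

(* Main.v *)
Require Import Defs.
From mathcomp Require Import all_boot all_order all_algebra.
From mathcomp Require Import reals.
From mathcomp Require Import ring.
Import Order.TTheory GRing.Theory Num.Theory.
Local Open Scope ring_scope.

Section S.
Context {R : realType} {n : nat}. Variables (A : tensor3 R n) (x : 'I_n -> R).

Let Y i := \sum_(j < n) \sum_(k < n) A i j k * x j * x k.

Lemma tformB : tform4 (tensorB A) x = \sum_(i < n) Y i * Y i.
Proof.
rewrite /tform4 /tensorB /Y.
pose F i i1 i2 i3 i4 := A i i1 i2 * x i1 * x i2 * (A i i3 i4 * x i3 * x i4).
transitivity (\sum_(i1 < n) \sum_(i2 < n) \sum_(i3 < n) \sum_(i4 < n) \sum_(i < n) F i i1 i2 i3 i4).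
  apply: eq_bigr => i1 _; apply: eq_bigr => i2 _; apply: eq_bigr => i3 _; apply: eq_bigr => i4 _.
  rewrite !mulr_suml; apply: eq_bigr => i _; rewrite /F; ring.
transitivity (\sum_(i < n) \sum_(i1 < n) \sum_(i2 < n) \sum_(i3 < n) \sum_(i4 < n) F i i1 i2 i3 i4).
  have E : forall i1 i2 i3, \sum_(i4 < n) \sum_(i < n) F i i1 i2 i3 i4 = \sum_(i < n) \sum_(i4 < n) F i i1 i2 i3 i4.
    by move=> *; rewrite exchange_big.
  have E2 : forall i1 i2, \sum_(i3 < n) \sum_(i4 < n) \sum_(i < n) F i i1 i2 i3 i4 = \sum_(i < n) \sum_(i3 < n) \sum_(i4 < n) F i i1 i2 i3 i4.
    by move=> *; rewrite (eq_bigr _ (fun i3 _ => E _ _ i3)) exchange_big.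
  have E3 : forall i1, \sum_(i2 < n) \sum_(i3 < n) \sum_(i4 < n) \sum_(i < n) F i i1 i2 i3 i4 = \sum_(i < n) \sum_(i2 < n) \sum_(i3 < n) \sum_(i4 < n) F i i1 i2 i3 i4.
    by move=> *; rewrite (eq_bigr _ (fun i2 _ => E2 _ i2)) exchange_big.
  by rewrite (eq_bigr _ (fun i1 _ => E3 i1)) exchange_big.
apply: eq_bigr => i _; rewrite mulr_suml; apply: eq_bigr => i1 _.
rewrite mulr_suml; apply: eq_bigr => i2 _.
rewrite mulr_sumr; apply: eq_bigr => i3 _.
rewrite mulr_sumr; apply: eq_bigr => i4 _.
by [].
Qed.

Lemma tform_lin (c : R) (T1 T2 T3 : tensor4 R n) :
  tform4 (fun a b d e => c * (T1 a b d e + T2 a b d e + T3 a b d e)) x =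
  c * (tform4 T1 x + tform4 T2 x + tform4 T3 x).
Proof.
rewrite /tform4 -!big_split mulr_sumr; apply: eq_bigr => a _.
rewrite -!big_split mulr_sumr; apply: eq_bigr => b _.
rewrite -!big_split mulr_sumr; apply: eq_bigr => d _.
rewrite -!big_split mulr_sumr; apply: eq_bigr => e _.
rewrite /=; ring.
Qed.

Lemma perm1 (T : tensor4 R n) :
  tform4 (fun a b d e => T a d b e) x = tform4 T x.
Proof.
rewrite /tform4; apply: eq_bigr => a _.
rewrite exchange_big; apply: eq_bigr => b _; apply: eq_bigr => d _;
apply: eq_bigr => e _; ring.
Qed.

Lemma perm2 (T : tensor4 R n) :
  tform4 (fun a b d e => T a e b d) x = tform4 T x.
Proof.
rewrite /tform4; apply: eq_bigr => a _.
under eq_bigr => b _ do rewrite exchange_big.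
rewrite exchange_big; apply: eq_bigr => b _; apply: eq_bigr => d _;
apply: eq_bigr => e _; ring.
Qed.

End S.

Theorem theorem1p1 (R : realType) (n : nat) (A : tensor3 R n) :
  piezoelectric_type A ->
  positive_semidefinite4 (tensorBbar A) /\
  (forall lambda : R, Z_eigenvalue (tensorBbar A) lambda -> 0 <= lambda).
Proof.
move=> _.
have psd : positive_semidefinite4 (tensorBbar A).
  move=> x; rewrite /tensorBbar tform_lin.
  rewrite (perm1 x (tensorB A)) (perm2 x (tensorB A)) (tformB A x).
  apply: mulr_ge0; first by rewrite invr_ge0 ler0n.
  apply: addr_ge0; first apply: addr_ge0;
  by apply: sumr_ge0 => i _; apply: sqr_ge0.
split=> // lambda [x [Hx Hn]].
have : tform4 (tensorBbar A) x = lambda.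
  rewrite -[RHS]mulr1 -Hn mulr_sumr /tform4; apply: eq_bigr => i _.
  rewrite mulrA -Hx /tapply3.
  rewrite mulr_suml; apply: eq_bigr => j _.
  rewrite mulr_suml; apply: eq_bigr => k _.
  rewrite mulr_suml; apply: eq_bigr => l _. ring.
move=> <-; exact: psd.
Qed.
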